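(* In the ALOHA network described below, the transmit probability $p_{\mathrm{opt}}\in(0,1)$ that minimizes the mean local delay $\widetilde{D}(p)$ satisfies $$p_{\mathrm{opt}}\in\left(\frac{1}{\lambda c_d r_0^d\theta^{\delta}C(\delta)+2},\ \frac{1}{\lambda c_d r_0^d\theta^{\delta}C(\delta)}\right).$$
   Context: Model: transmitters form a homogeneous Poisson point process $\Phi$ of intensity $\lambda>0$ in $\mathbb{R}^d$; the typical receiver is at the origin and its desired transmitter $x_0\in\Phi$ is at distance $r_0>0$; probabilities are under the Palm distribution at $x_0$. Time is slotted. Path loss $\kappa r^{-\alpha}$ with $\alpha>d$, $\delta=d/\alpha\in(0,1)$. Power fading coefficients $h_{k,x}$ are i.i.d. exponential with mean $1$ over transmitters and slots, independent of everything. Unit power, always backlogged transmitters. Bandwidth $W$, noise power spectral density $N_r$, $N_0=N_r/\kappa$, SINR threshold $\theta>0$. $c_d$ is the volume of the unit ball in $\mathbb{R}^d$, $C(\delta)=\Gamma(1+\delta)\Gamma(1-\delta)=\frac{\pi\delta}{\sin(\pi\delta)}$. ALOHA with transmit probability $p$: each transmitter (including $x_0$) is independently active in each slot with probability $p$, independently over transmitters and slots; $\Phi_k$ is the active set in slot $k$; $\mathrm{SINR}_k=\frac{h_{k,x_0}r_0^{-\alpha}}{WN_0+\sum_{x\in\Phi\setminus\{x_0\}}h_{k,x}|x|^{-\alpha}\mathbf{1}(x\in\Phi_k)}$; a slot is successful if $x_0$ is active and $\mathrm{SINR}_k>\theta$; the local delay is the number of slots until the first success and $\widetilde{D}(p)$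 is its mean. (It equals $\widetilde{D}(p)=\frac1p\exp\left(\frac{p\lambda c_d r_0^d\theta^\delta C(\delta)}{(1-p)^{1-\delta}}+\theta r_0^\alpha WN_0\right)$.) *)

(* Defs.v *)
From Stdlib Require Import Reals Lra Arith Factorial.
Open Scope R_scope.

(* Volume of the unit ball in R^d: c_d = PI^(d/2) / Gamma(d/2+1), written
   out at integer / half-integer arguments:
   d = 2k   : PI^k / k!
   d = 2k+1 : 2 * k! * (4 PI)^k / (2k+1)! *)
Definition unit_ball_volume (d : nat) : R :=
  if Nat.even d then PI ^ (Nat.div2 d) / INR (fact (Nat.div2 d))
  else 2 * INR (fact (Nat.div2 d)) * (4 * PI) ^ (Nat.div2 d) / INR (fact d).

(* C(delta) = Gamma(1+delta) Gamma(1-delta) = PI delta / sin(PI delta) *)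
Definition Cdelta (delta : R) : R := PI * delta / sin (PI * delta).

Definition delta_of (d : nat) (alpha : R) : R := INR d / alpha.

Definition aloha_a (lam : R) (d : nat) (alpha r0 theta : R) : R :=
  lam * unit_ball_volume d * r0 ^ d * Rpower theta (delta_of d alpha)
      * Cdelta (delta_of d alpha).

Definition mean_local_delay (lam : R) (d : nat) (alpha r0 theta W N0 : R)
    (p : R) : R :=
  / p * exp (p * aloha_a lam d alpha r0 theta
                 / Rpower (1 - p) (1 - delta_of d alpha)
             + theta * Rpower r0 alpha * W * N0).

(* Main.v *)
Require Import Defs.
From Stdlib Require Import Reals Lra Psatz Arith Factorial Lia.
Open Scope R_scope.


Definition Fp (a dl x : R) := - ln x + a * (x * Rpower (1 - x) (dl - 1)).
Definition dF (a dl x : R) := - / x + a * (1 * Rpower (1 - x) (dl - 1)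
   + x * ((dl - 1) * Rpower (1 - x) (dl - 1 - 1) * (0 - 1))).

Lemma Fp_der (a dl : R) (ha : 0 < a) (hd0 : 0 < dl) (hd1 : dl < 1) x : 0 < x < 1 -> derivable_pt_lim (Fp a dl) x ((dF a dl) x).
Proof.
  intros [h0 h1].
  assert (H1 : derivable_pt_lim (fct_cte 1 - id)%F x (0 - 1)).
  { apply derivable_pt_lim_minus; [apply derivable_pt_lim_const | apply derivable_pt_lim_id]. }
  assert (H2 := derivable_pt_lim_power (1 - x) (dl - 1) ltac:(lra)).
  assert (H3 := derivable_pt_lim_comp _ (fun y => Rpower y (dl - 1)) x _ _ H1 H2).
  assert (H4 := derivable_pt_lim_mult _ _ x _ _ (derivable_pt_lim_id x) H3).
  assert (H5 := derivable_pt_lim_scal _ a x _ H4).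
  assert (H6 := derivable_pt_lim_opp _ x _ (derivable_pt_lim_ln x h0)).
  assert (H7 := derivable_pt_lim_plus _ _ x _ _ H6 H5).
  exact H7.
Qed.

Lemma kbounds (a dl : R) (ha : 0 < a) (hd0 : 0 < dl) (hd1 : dl < 1) x : 0 < x < 1 ->
  0 < Rpower (1 - x) (dl - 1 - 1) /\
  1 < Rpower (1 - x) (dl - 1 - 1) * (1 - x) /\
  Rpower (1 - x) (dl - 1 - 1) * ((1 - x) * (1 - x)) < 1.
Proof.
  intros [h0 h1].
  assert (hl : ln (1 - x) < 0).
  { rewrite <- ln_1. apply ln_increasing; lra. }
  unfold Rpower.
  assert (e1 : 1 - x = exp (ln (1 - x))) by (rewrite exp_ln; lra).
  split; [apply exp_pos|].
  set (l := ln (1 - x)) in *.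
  split.
  - rewrite e1, <- exp_plus. rewrite <- exp_0 at 1.
    apply exp_increasing. nra.
  - rewrite e1, <- !exp_plus. replace 1 with (exp 0) at 3 by apply exp_0.
    apply exp_increasing. nra.
Qed.

Lemma dF_eq (a dl : R) (ha : 0 < a) (hd0 : 0 < dl) (hd1 : dl < 1) x : 0 < x < 1 ->
  x * (dF a dl) x = -1 + a * x * Rpower (1 - x) (dl - 1 - 1) * (1 - dl * x).
Proof.
  intros [h0 h1].
  assert (E : Rpower (1 - x) (dl - 1) = Rpower (1 - x) (dl - 1 - 1) * (1 - x)).
  { replace (dl - 1) with ((dl - 1 - 1) + 1) at 1 by ring.
    rewrite Rpower_plus, Rpower_1; lra. }
  unfold dF. rewrite E; clear E. field. lra.
Qed.

Lemma dF_neg (a dl : R) (ha : 0 < a) (hd0 : 0 < dl) (hd1 : dl < 1) x : 0 < x -> x * (a + 2) <= 1 -> (dF a dl) x < 0.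
Proof.
  intros h0 h1.
  assert (hx1 : x < 1) by nra.
  destruct (kbounds a dl ha hd0 hd1 x (conj h0 hx1)) as [k0 [k1 k2]].
  assert (E := dF_eq a dl ha hd0 hd1 x (conj h0 hx1)).
  set (k := Rpower (1 - x) (dl - 1 - 1)) in *; clearbody k.
  assert (x * (dF a dl) x < 0).
  { rewrite E; clear E.
    assert (a * x * k * (1 - dl * x) <= a * x * k).
    { assert (0 < a*x*k*(dl*x)) by (repeat apply Rmult_lt_0_compat; lra). lra. }
    assert (a * x * k * ((1-x)*(1-x)) < a * x).
    { assert (0 < a*x) by nra.
      replace (a * x * k * ((1-x)*(1-x))) with (a * x * (k * ((1-x)*(1-x)))) by ring.
      rewrite <- (Rmult_1_r (a*x)) at 2. apply Rmult_lt_compat_l; lra. }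
    assert ((1-x)*(1-x) >= a * x) by nra.
    assert (a * x * k * ((1-x)*(1-x)) >= a*x*k*(a*x)) by (assert (0 < a * x * k) by (apply Rmult_lt_0_compat; nra); nra).
    nra. }
  clear E; nra.
Qed.

Lemma dF_pos (a dl : R) (ha : 0 < a) (hd0 : 0 < dl) (hd1 : dl < 1) x : x < 1 -> x * (1 + a * (1 - dl)) >= 1 -> 0 < (dF a dl) x.
Proof.
  intros h1 h0.
  assert (hx0 : 0 < x) by (assert (0 < 1 + a * (1 - dl)) by nra; nra).
  destruct (kbounds a dl ha hd0 hd1 x (conj hx0 h1)) as [k0 [k1 k2]].
  assert (E := dF_eq a dl ha hd0 hd1 x (conj hx0 h1)).
  set (k := Rpower (1 - x) (dl - 1 - 1)) in *; clearbody k.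
  assert (0 < x * (dF a dl) x).
  { rewrite E; clear E.
    assert (a * x * (1 - dl) >= 1 - x) by nra.
    assert (a * x * k * (1 - dl * x) >= a * x * k * (1 - dl)).
    { assert (0 < a*x*k*(dl*(1-x))) by (repeat apply Rmult_lt_0_compat; lra). lra. }
    assert (a * x * (1 - dl) * k >= (1 - x) * k).
    { apply Rle_ge, Rmult_le_compat_r; lra. }
    lra. }
  clear E; nra.
Qed.

Lemma crit (a dl : R) (ha : 0 < a) (hd0 : 0 < dl) (hd1 : dl < 1) x : 0 < x < 1 -> (dF a dl) x = 0 -> a * x < 1 /\ x * (a + 2) > 1.
Proof.
  intros hx hz.
  split.
  - destruct (Rlt_or_le (a * x) 1) as [h|h]; auto.
    assert (0 < (dF a dl) x); [|lra].
    destruct hx as [h0 h1].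
    destruct (kbounds a dl ha hd0 hd1 x (conj h0 h1)) as [k0 [k1 k2]].
    assert (E := dF_eq a dl ha hd0 hd1 x (conj h0 h1)).
    set (k := Rpower (1 - x) (dl - 1 - 1)) in *; clearbody k.
    assert (0 < x * (dF a dl) x); [|nra].
    rewrite E; clear E.
    assert (1 - dl * x > 1 - x) by nra.
    assert (k * (1 - dl * x) > 1) by nra.
    assert (a * x * (k * (1 - dl * x)) > a * x) by nra.
    nra.
  - destruct (Rlt_or_le 1 (x * (a + 2))) as [h|h]; [lra|].
    assert ((dF a dl) x < 0) by (apply (dF_neg a dl ha hd0 hd1); lra). lra.
Qed.

Lemma F_cont (a dl : R) (ha : 0 < a) (hd0 : 0 < dl) (hd1 : dl < 1) x : 0 < x < 1 -> continuity_pt (Fp a dl) x.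
Proof.
  intros hx. apply derivable_continuous_pt.
  exists ((dF a dl) x). apply (Fp_der a dl ha hd0 hd1); auto.
Qed.

Lemma F_exists (a dl : R) (ha : 0 < a) (hd0 : 0 < dl) (hd1 : dl < 1) : exists m, 0 < m < 1 /\ forall q, 0 < q < 1 -> (Fp a dl) m <= (Fp a dl) q.
Proof.
  set (L := / (a + 2)). set (U := / (1 + a * (1 - dl))).
  assert (hL : 0 < L) by (unfold L; apply Rinv_0_lt_compat; lra).
  assert (hLa : L * (a + 2) = 1) by (unfold L; field; lra).
  assert (hU0 : 0 < 1 + a * (1 - dl)) by nra.
  assert (hUa : U * (1 + a * (1 - dl)) = 1) by (unfold U; field; lra).
  assert (hU : 0 < U) by (unfold U; apply Rinv_0_lt_compat; lra).
  clearbody L U.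
  assert (0 < U * (a * (1 - dl))) by (repeat apply Rmult_lt_0_compat; lra).
  assert (hU1 : U < 1) by lra.
  assert (hLU : L < U).
  { destruct (Rlt_or_le L U) as [h|h]; auto.
    assert (U * (a + 2) <= L * (a + 2)) by (apply Rmult_le_compat_r; lra).
    assert (0 < a * dl) by (apply Rmult_lt_0_compat; lra).
    assert (0 < U * (1 + a * dl)) by (repeat apply Rmult_lt_0_compat; lra).
    lra. }
  destruct (continuity_ab_min (Fp a dl) L U ltac:(lra)) as [m [Hm Hmr]].
  { intros c hc. apply (F_cont a dl ha hd0 hd1). lra. }
  exists m. split; [lra|].
  intros q hq.
  destruct (Rlt_or_le q L) as [hqL|hqL].
  - destruct (MVT_cor2 (Fp a dl) (dF a dl) q L hqL) as [c [Ec Hc]].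
    { intros c hc. apply (Fp_der a dl ha hd0 hd1). lra. }
    assert ((dF a dl) c < 0) by (apply (dF_neg a dl ha hd0 hd1); nra).
    assert ((Fp a dl) m <= (Fp a dl) L) by (apply Hm; lra).
    nra.
  - destruct (Rlt_or_le U q) as [hqU|hqU].
    + destruct (MVT_cor2 (Fp a dl) (dF a dl) U q hqU) as [c [Ec Hc]].
      { intros c hc. apply (Fp_der a dl ha hd0 hd1). lra. }
      assert (0 < (dF a dl) c) by (apply (dF_pos a dl ha hd0 hd1); nra).
      assert ((Fp a dl) m <= (Fp a dl) U) by (apply Hm; lra).
      nra.
    + apply Hm; lra.
Qed.

Lemma F_min_crit (a dl : R) (ha : 0 < a) (hd0 : 0 < dl) (hd1 : dl < 1) p : 0 < p < 1 -> (forall q, 0 < q < 1 -> (Fp a dl) p <= (Fp a dl) q) ->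
  a * p < 1 /\ p * (a + 2) > 1.
Proof.
  intros hp Hm.
  apply (crit a dl ha hd0 hd1); auto.
  assert (pr : derivable_pt (Fp a dl) p) by (exists ((dF a dl) p); apply (Fp_der a dl ha hd0 hd1); auto).
  assert (H := deriv_minimum (Fp a dl) 0 1 p pr ltac:(lra) ltac:(lra)
      (fun x h0 h1 => Hm x (conj h0 h1))).
  rewrite (derive_pt_eq_0 (Fp a dl) p ((dF a dl) p) pr (Fp_der a dl ha hd0 hd1 p hp)) in H. exact H.
Qed.

Lemma a_pos (d : nat) (alpha lam r0 theta : R) :
  (0 < d)%nat -> INR d < alpha -> 0 < lam -> 0 < r0 -> 0 < theta ->
  0 < aloha_a lam d alpha r0 theta.
Proof.
  intros hd ha hl hr ht.
  assert (hdp : 0 < INR d) by (apply lt_0_INR; lia).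
  assert (hdl0 : 0 < delta_of d alpha) by (unfold delta_of; apply Rdiv_lt_0_compat; lra).
  assert (hdl1 : delta_of d alpha < 1).
  { unfold delta_of. apply (Rmult_lt_reg_r alpha); [lra|]. field_simplify; lra. }
  unfold aloha_a.
  assert (hv : 0 < unit_ball_volume d).
  { unfold unit_ball_volume. assert (hPI := PI_RGT_0).
    destruct (Nat.even d).
    - apply Rdiv_lt_0_compat; [apply pow_lt; lra|apply lt_0_INR, lt_O_fact].
    - apply Rdiv_lt_0_compat; [|apply lt_0_INR, lt_O_fact].
      apply Rmult_lt_0_compat; [|apply pow_lt; lra].
      apply Rmult_lt_0_compat; [lra|apply lt_0_INR, lt_O_fact]. }
  assert (hc : 0 < Cdelta (delta_of d alpha)).
  { unfold Cdelta. assert (hPI := PI_RGT_0).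
    assert (0 < PI * delta_of d alpha) by (apply Rmult_lt_0_compat; lra).
    apply Rdiv_lt_0_compat; auto.
    apply sin_gt_0; auto. rewrite <- (Rmult_1_r PI) at 2.
    apply Rmult_lt_compat_l; lra. }
  assert (0 < Rpower theta (delta_of d alpha)) by (unfold Rpower; apply exp_pos).
  assert (0 < r0 ^ d) by (apply pow_lt; lra).
  apply Rmult_lt_0_compat; [|exact hc].
  apply Rmult_lt_0_compat; [|exact H].
  apply Rmult_lt_0_compat; [|exact H0].
  apply Rmult_lt_0_compat; [exact hl|exact hv].
Qed.

Lemma D_eq (d : nat) (alpha lam r0 theta W N0 q : R) : 0 < q < 1 ->
  mean_local_delay lam d alpha r0 theta W N0 q =
  exp (Fp (aloha_a lam d alpha r0 theta) (delta_of d alpha) q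
       + theta * Rpower r0 alpha * W * N0).
Proof.
  intros [h0 h1]. unfold mean_local_delay, Fp.
  set (a := aloha_a lam d alpha r0 theta). set (dl := delta_of d alpha).
  set (c := theta * Rpower r0 alpha * W * N0).
  replace (dl - 1) with (- (1 - dl)) by ring. rewrite Rpower_Ropp.
  rewrite Rplus_assoc, (exp_plus (- ln q)), exp_Ropp, exp_ln by lra.
  f_equal. f_equal. unfold Rdiv. ring.
Qed.

Theorem theorem6 (d : nat) (alpha lam r0 theta W N0 : R)
  (hd : (0 < d)%nat) (halpha : INR d < alpha)
  (hlam : 0 < lam) (hr0 : 0 < r0) (htheta : 0 < theta)
  (hW : 0 < W) (hN0 : 0 <= N0) :
  let D := mean_local_delay lam d alpha r0 theta W N0 in
  let a := aloha_a lam d alpha r0 theta in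
  (exists p, 0 < p < 1 /\ forall q, 0 < q < 1 -> D p <= D q) /\
  (forall p, 0 < p < 1 -> (forall q, 0 < q < 1 -> D p <= D q) ->
     / (a + 2) < p < / a).
Proof.
  intros D a.
  assert (hdp : 0 < INR d) by (apply lt_0_INR; lia).
  assert (hdl0 : 0 < delta_of d alpha) by (unfold delta_of; apply Rdiv_lt_0_compat; lra).
  assert (hdl1 : delta_of d alpha < 1).
  { unfold delta_of. apply (Rmult_lt_reg_r alpha); [lra|]. field_simplify; lra. }
  assert (ha : 0 < a) by (apply a_pos; auto).
  set (dl := delta_of d alpha) in *.
  assert (HD : forall p q, 0 < p < 1 -> 0 < q < 1 -> (D p <= D q <-> Fp a dl p <= Fp a dl q)).
  { intros p q hp hq. unfold D. rewrite !D_eq by auto. fold a dl.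
    set (c := theta * Rpower r0 alpha * W * N0).
    split; intro H.
    - destruct (Rle_or_lt (Fp a dl p) (Fp a dl q)) as [h|h]; auto.
      exfalso. assert (exp (Fp a dl q + c) < exp (Fp a dl p + c)) by (apply exp_increasing; lra). lra.
    - destruct H as [h|h].
      + left. apply exp_increasing; lra.
      + right. rewrite h. reflexivity. }
  split.
  - destruct (F_exists a dl ha hdl0 hdl1) as [m [hm Hm]].
    exists m. split; auto. intros q hq. apply HD; auto.
  - intros p hp Hm.
    destruct (F_min_crit a dl ha hdl0 hdl1 p hp) as [h1 h2].
    { intros q hq. apply HD; auto. }
    split.
    + apply (Rmult_lt_reg_r (a + 2)); [lra|]. rewrite Rinv_l by lra. lra.
    + apply (Rmult_lt_reg_l a); [lra|]. rewrite Rinv_r by lra. lra.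
Qed.
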